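(* Let $\theta:\mathbb{A}\to\mathbb{A}^\lambda$ be a primitive substitution (satisfying the standing assumptions) with $c(\theta)=1$. Then $h(\theta)=1$.
   Context: Substitution of constant length $\lambda\ge2$: $\theta:\mathbb{A}\to\mathbb{A}^\lambda$, $\theta(a)=\theta(a)_0\cdots\theta(a)_{\lambda-1}$, extended by concatenation, $\theta^k$ its iterates; primitive: for some $k$, every $\theta^k(a)$ contains every letter. Standing assumptions: some $a_0$ has $\theta(a_0)_0=a_0$, $\theta$ injective on letters, the subshift $X_\theta$ infinite; $u$ is the fixed point $\theta(u)=u$ with $u[0]=a_0$. For $k\ge0$, $S_k=\{r\ge1:u[k+r]=u[k]\}$ and $g_k=\gcd S_k$; height $h(\theta)=\max\{m\ge1:\gcd(m,\lambda)=1,\ m\mid g_0\}$ (it also equals $\max\{m:\gcd(m,\lambda)=1, m\mid g_k\}$ for each $k$). Column number $c(\theta)=\min_{k\ge1,\,0\le j<\lambda^k}|\{\theta^k(a)_j:a\in\mathbb{A}\}|$. *)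

(* Defs.v *)
From HB Require Import structures.
From mathcomp Require Import all_boot all_order all_algebra.
From Stdlib Require List.
Set Implicit Arguments.
Unset Strict Implicit.
Unset Printing Implicit Defensive.

Section Subst.
Variables (A : finType) (lam : nat) (theta : A -> lam.-tuple A).

Definition subst_word (w : seq A) : seq A :=
  flatten [seq (tval (theta b)) | b <- w].

Definition thetak (k : nat) (a : A) : seq A := iter k subst_word [:: a].

Definition thetak_letter (k : nat) (a : A) (j : nat) : A := nth a (thetak k a) j.

Definition primitive : Prop :=
  exists k, forall a b : A, b \in thetak k a.

Definition in_language (w : seq A) : Prop :=
  exists k a, infix w (thetak k a).

Definition in_subshift (x : int -> A) : Prop :=
  forall (i : int) (n : nat), in_language [seq x (i + (j%:Z))%R | j <- iota 0 n].

Definition subshift_infinite : Prop :=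
  forall s : seq (int -> A),
    exists x, in_subshift x /\ forall y, List.In y s -> exists i, x i <> y i.

(* the fixed point u = theta(u) starting with a0: u[n] = theta^{n+1}(a0)_n *)
Definition fixed_point (a0 : A) (n : nat) : A := thetak_letter n.+1 a0 n.

Definition return_set (a0 : A) (k : nat) : pred nat :=
  fun r => (1 <= r) && (fixed_point a0 (k + r) == fixed_point a0 k).

Definition standing_assumptions (a0 : A) : Prop :=
  [/\ 2 <= lam, thetak_letter 1 a0 0 = a0, injective theta & subshift_infinite].

End Subst.

Definition is_gcd_of (P : pred nat) (g : nat) : Prop :=
  (forall r, P r -> g %| r) /\ (forall e, (forall r, P r -> e %| r) -> e %| g).

Definition is_max_of (Q : nat -> Prop) (m : nat) : Prop :=
  Q m /\ forall n, Q n -> n <= m.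

Definition is_min_of (Q : nat -> Prop) (m : nat) : Prop :=
  Q m /\ forall n, Q n -> m <= n.

Definition is_height (A : finType) (lam : nat) (theta : A -> lam.-tuple A)
    (a0 : A) (h : nat) : Prop :=
  exists g, is_gcd_of (return_set theta a0 0) g /\
    is_max_of (fun m => 1 <= m /\ coprime m lam /\ m %| g) h.

Definition is_column_number (A : finType) (lam : nat) (theta : A -> lam.-tuple A)
    (c : nat) : Prop :=
  is_min_of (fun n => exists k j, 1 <= k /\ j < lam ^ k /\
                n = #|[set thetak_letter theta k a j | a : A]|) c.

(* Main.v *)
Require Import Defs.
From HB Require Import structures.
From mathcomp Require Import all_boot all_order all_algebra.
From mathcomp Require Import zify.

Section W.
Variables (A : finType) (lam : nat) (theta : A -> lam.-tuple A).

Lemma sw_cat s1 s2 : subst_word theta (s1 ++ s2) = subst_word theta s1 ++ subst_word theta s2.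
Proof. by rewrite /subst_word map_cat flatten_cat. Qed.

Lemma iter_sw k w : iter k (subst_word theta) w = flatten [seq thetak theta k b | b <- w].
Proof.
elim: k w => [|k IH] w /=.
  by elim: w => //= b w IHw; rewrite -IHw.
rewrite IH /thetak /=; elim: w => //= b w IHw.
by rewrite sw_cat IHw.
Qed.

Lemma thetakD k2 k1 a : thetak theta (k2 + k1) a =
   flatten [seq thetak theta k2 b | b <- thetak theta k1 a].
Proof. by rewrite /thetak iterD iter_sw. Qed.

Lemma size_flat_const (f : A -> seq A) L s : (forall b, size (f b) = L) ->
  size (flatten [seq f b | b <- s]) = L * size s.
Proof.
move=> H; elim: s => [|b s IH] /=; first by rewrite muln0.
by rewrite size_cat IH H mulnS.
Qed.

Lemma size_thetak k a : size (thetak theta k a) = lam ^ k.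
Proof.
elim: k a => // k IH a; rewrite -addn1 thetakD.
rewrite (@size_flat_const _ (lam ^ k)) // /thetak /=.
rewrite /subst_word /= size_cat size_tuple /=.
by rewrite addn0 addn1 expnS mulnC.
Qed.

Lemma nth_flat_const (f : A -> seq A) L s q j x0 y0 : (forall b, size (f b) = L) ->
  j < L -> q < size s ->
  nth x0 (flatten [seq f b | b <- s]) (q * L + j) = nth x0 (f (nth y0 s q)) j.
Proof.
move=> H jL; elim: s q => [|b s IH] [|q] //= qs.
  by rewrite nth_cat H jL.
rewrite nth_cat H mulSn -addnA ltnNge leq_addr /= addKn IH //.
Qed.

Lemma nth_thetakD k2 k1 a q j x0 : j < lam ^ k2 -> q < lam ^ k1 ->
  nth x0 (thetak theta (k2 + k1) a) (q * lam ^ k2 + j) =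
  nth x0 (thetak theta k2 (nth x0 (thetak theta k1 a) q)) j.
Proof.
move=> jl ql; rewrite thetakD (@nth_flat_const _ (lam ^ k2) _ _ _ _ x0) //.
  by move=> b; rewrite size_thetak.
by rewrite size_thetak.
Qed.

End W.

Section FP.
Variables (A : finType) (lam : nat) (theta : A -> lam.-tuple A) (a0 : A).
Hypothesis lam2 : 2 <= lam.
Hypothesis H0 : thetak_letter theta 1 a0 0 = a0.

Lemma lam_gt0 : 0 < lam. Proof. by apply: leq_trans lam2. Qed.

Lemma prefix1 K n : n < lam ^ K ->
  nth a0 (thetak theta (K + 1) a0) n = nth a0 (thetak theta K a0) n.
Proof.
move=> nK.
have := @nth_thetakD _ _ theta K 1 a0 0 n a0 nK.
rewrite mul0n add0n => ->; last by rewrite expn1 lam_gt0.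
by rewrite -/(thetak_letter theta 1 a0 0) H0.
Qed.

Lemma stable K d n : n < lam ^ K ->
  nth a0 (thetak theta (K + d) a0) n = nth a0 (thetak theta K a0) n.
Proof.
move=> nK; elim: d => [|d IH]; first by rewrite addn0.
rewrite addnS -addn1 prefix1 ?IH // (leq_trans nK) // leq_pexp2l ?lam_gt0 // ?leq_addr.
by [].
Qed.

Lemma FPnth K n : n < lam ^ K -> fixed_point theta a0 n = nth a0 (thetak theta K a0) n.
Proof.
move=> nK; rewrite /fixed_point /thetak_letter.
rewrite -(@stable n.+1 K); last exact: ltn_trans (ltnSn n) (ltn_expl _ lam2).
by rewrite addnC stable.
Qed.

End FP.

From Stdlib Require Import Classical.

Section G.
Variables (S : pred nat) (p : nat).
Hypotheses (p_gt0 : 0 < p) (Sp : S p).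

Definition gN N := \big[gcdn/0]_(i < N.+1 | S i) (i : nat).

Lemma gN_dvd N r : r <= N -> S r -> gN N %| r.
Proof.
move=> rN Sr; have rN' : r < N.+1 by [].
exact: (biggcdn_inf (Ordinal rN')).
Qed.

Lemma dvd_gN N e : (forall r, S r -> e %| r) -> e %| gN N.
Proof. by move=> H; apply/dvdn_biggcdP => i Si; apply: H. Qed.

Lemma gN_mono N N' : N <= N' -> gN N' %| gN N.
Proof.
move=> NN; apply/dvdn_biggcdP => i Si; apply: gN_dvd => //.
have := ltn_ord i; rewrite ltnS => iN; exact: leq_trans iN NN.
Qed.

Lemma gN_pos N : p <= N -> 0 < gN N.
Proof. by move=> pN; apply: (dvdn_gt0 p_gt0); apply: gN_dvd. Qed.

Lemma gN_stab n : forall N, p <= N -> gN N = n ->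
  exists N0, p <= N0 /\ forall N', N0 <= N' -> gN N' = gN N0.
Proof.
elim/ltn_ind: n => n IH N pN gNn.
case: (classic (forall N', N <= N' -> gN N' = gN N)) => [H|H].
  by exists N.
have [N' HN'] := not_all_ex_not _ _ H.
have NN' : N <= N'.
  by case: (boolP (N <= N')) => // /negbTE nle; exfalso; apply: HN' => /=; rewrite nle.
have ne : gN N' <> gN N by move=> e; apply: HN' => _.
apply: (IH (gN N') _ N') => //; last exact: leq_trans pN NN'.
rewrite -gNn ltn_neqAle; apply/andP; split; first by apply/eqP.
apply: dvdn_leq; [exact: gN_pos | exact: gN_mono].
Qed.

Lemma gcd_exists : exists g, is_gcd_of S g.
Proof.
have [N0 [pN0 H]] := @gN_stab (gN p) p (leqnn p) erefl.
exists (gN N0); split.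
  move=> r Sr; rewrite -(H (maxn N0 r)) ?leq_maxl //.
  by apply: gN_dvd => //; rewrite leq_maxr.
by move=> e He; apply: dvd_gN.
Qed.

End G.

Lemma arith1 Q M t L : Q < M -> t < L -> Q * L + t < M * L.
Proof. move=> h1 h2; nia. Qed.

Theorem mainTheorem5 (A : finType) (lam : nat) (theta : A -> lam.-tuple A) (a0 : A) :
  standing_assumptions theta a0 ->
  primitive theta ->
  is_column_number theta 1 ->
  is_height theta a0 1.
Proof.
move=> [lam2 H0 _ _] [K prim] [[k [j [k1 [jk Hc]]]] _].
have lam0 : 0 < lam by apply: leq_trans lam2.
have /cards1P [x Hx] : #|[set thetak_letter theta k a j | a : A]| == 1 by rewrite -Hc.
have col a : thetak_letter theta k a j = x.
  apply/set1P; rewrite -Hx; exact: imset_f.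
set t := index a0 (thetak theta K x).
have ht : t < lam ^ K by rewrite -(@size_thetak _ _ theta K x) index_mem prim.
have hx : nth a0 (thetak theta K x) t = a0 by rewrite nth_index ?prim.
pose pos q := (q * lam ^ k + j) * lam ^ K + t.
have l2 : 3 < lam ^ 2 by rewrite expnS expn1; nia.
have inS q : 0 < q < 3 -> return_set theta a0 0 (pos q).
  case/andP => q0 q3.
  have hq : q < lam ^ 2 by apply: ltn_trans q3 l2.
  have hQ : q * lam ^ k + j < lam ^ (k + 2).
    by rewrite expnD (mulnC (lam ^ k)) arith1.
  apply/andP; split.
    rewrite /pos; have : 0 < lam ^ k by rewrite expn_gt0 lam0.
    have : 0 < lam ^ K by rewrite expn_gt0 lam0.
    nia.
  rewrite add0n /fixed_point -/(thetak_letter theta 1 a0 0) H0.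
  rewrite -/(fixed_point theta a0 (pos q)) (@FPnth _ _ theta a0 lam2 H0 (K + (k + 2))).
    rewrite /pos nth_thetakD // nth_thetakD //.
    set c := nth a0 (thetak theta 2 a0) q.
    rewrite (@set_nth_default _ (thetak theta k c) c a0 j) ?size_thetak //.
    by rewrite -/(thetak_letter _ _ _ _) col hx.
  by rewrite /pos expnD (mulnC (lam ^ K)) arith1.
have p0 : 0 < pos 1 by have := inS 1 erefl; case/andP.
have [g [Hg1 Hg2]] := @gcd_exists _ _ p0 (inS 1 erefl).
exists g; split; first by split.
split; first by rewrite coprime1n dvd1n.
move=> n [n1 [cn ng]].
have d1 := dvdn_trans ng (Hg1 _ (inS 1 erefl)).
have d2 := dvdn_trans ng (Hg1 _ (inS 2 erefl)).
have := dvdn_sub d2 d1.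
have -> : pos 2 - pos 1 = lam ^ (k + K).
  rewrite /pos expnD; nia.
move=> dn; have := coprimeXr (k + K) cn.
by rewrite /coprime (gcdn_idPl dn) => /eqP ->.
Qed.
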